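(* Let $t,p\in\mathbb{N}$ with $p\ge 3t^2+t+1$. Then $X_p\xrightarrow{\cap} tS_{t,t,t}$ and $Y_p\xrightarrow{\cap} tS_{t,t,t}$.
   Context: All graphs are finite and simple. For graphs $G_1=(V_1,E_1)$, $G_2=(V_2,E_2)$, $G_1\cap G_2=(V_1\cap V_2, E_1\cap E_2)$. For a graph $G=(V,E)$ and an injective map $\alpha$ on $V$, $G^{\alpha}$ has vertex set $\alpha(V)$ and edge set $\{\{\alpha(v),\alpha(w)\}: \{v,w\}\in E\}$. We write $G\xrightarrow{\cap} H$ if $H$ is (isomorphic to) $G^{\alpha_1}\cap\cdots\cap G^{\alpha_k}$ for some $k\ge1$ and injective maps $\alpha_1,\dots,\alpha_k$ on $V(G)$. For integers $a,b,c\ge1$, $S_{a,b,c}$ is the tree consisting of a vertex of degree $3$ together with three pendant paths having $a$, $b$, $c$ edges respectively; $tS_{t,t,t}$ is the disjoint union of $t$ copies of $S_{t,t,t}$. $X_p$ is the graph obtained from the complete bipartite graph $K_{p,p}$ by adding a new vertex adjacent to exactly two vertices, both in the same part of $K_{p,p}$; $Y_p$ is obtained from $K_{p,p}$ by adding a new vertex adjacent to exactly two vertices, one in each part. *)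

(* Defs.v *)
From mathcomp Require Import all_boot.
Set Implicit Arguments. Unset Strict Implicit. Unset Printing Implicit Defensive.

(* A finite simple graph is a finType of vertices with a symmetric,
   irreflexive boolean adjacency relation. *)

Definition img_edge (T : finType) (e : rel T) (a : T -> nat) (u v : nat) : Prop :=
  exists x y, a x = u /\ a y = v /\ e x y.

(* G --cap--> H : H is isomorphic to G^{a_0} cap ... cap G^{a_k} for some
   k >= 0 (i.e. k+1 >= 1 maps) and injective maps a_i from V(G) into a common
   ambient set (taken to be nat; the vertex set is finite so this is no loss).
   The isomorphism is phi : V(H) -> nat, injective, onto the common vertex set
   of the intersection, and preserving/reflecting edges. *)
Definition intersects_to (T : finType) (e : rel T) (U : finType) (eH : rel U) : Prop :=
  exists (k : nat) (a : 'I_k.+1 -> T -> nat),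
    (forall i, injective (a i)) /\
    exists phi : U -> nat,
      injective phi /\
      (forall n : nat, (forall i, exists x, a i x = n) <-> exists u, phi u = n) /\
      (forall u v, eH u v <-> forall i, img_edge e (a i) (phi u) (phi v)).

Definition symc (T : Type) (r : T -> T -> bool) : T -> T -> bool :=
  fun x y => r x y || r y x.

(* K_{p,p} with parts inl/inr, plus a new vertex None. *)
Definition KV (p : nat) : finType := option ('I_p + 'I_p)%type.

Definition Kgen (p : nat) (x y : KV p) : bool :=
  match x, y with
  | Some (inl _), Some (inr _) => true
  | _, _ => false
  end.

Definition Xgen (p : nat) (x y : KV p) : bool :=
  Kgen x y ||
  match x, y with
  | None, Some (inl i) => (nat_of_ord i == 0) || (nat_of_ord i == 1)
  | _, _ => false
  end.
Definition Xedge (p : nat) : rel (KV p) := symc (@Xgen p).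

Definition Ygen (p : nat) (x y : KV p) : bool :=
  Kgen x y ||
  match x, y with
  | None, Some (inl i) => nat_of_ord i == 0
  | None, Some (inr j) => nat_of_ord j == 0
  | _, _ => false
  end.
Definition Yedge (p : nat) : rel (KV p) := symc (@Ygen p).

(* S_{t,t,t}: center None; Some (c, i) is the (i+1)-th vertex from the center
   on the pendant path c (c < 3, i < t); each path has t edges. *)
Definition SV (t : nat) : finType := option ('I_3 * 'I_t)%type.

Definition Sgen (t : nat) (x y : SV t) : bool :=
  match x, y with
  | None, Some (_, i) => nat_of_ord i == 0
  | Some (c, i), Some (d, j) => (c == d) && (nat_of_ord j == (nat_of_ord i).+1)
  | _, _ => false
  end.
Definition Sedge (t : nat) : rel (SV t) := symc (@Sgen t).

Definition tSV (t : nat) : finType := ('I_t * SV t)%type.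
Definition tSedge (t : nat) : rel (tSV t) :=
  fun x y => (x.1 == y.1) && Sedge x.2 y.2.

(* Main.v *)
Require Import Defs.
From mathcomp Require Import all_boot zify.
Set Implicit Arguments. Unset Strict Implicit. Unset Printing Implicit Defensive.

Lemma assemble (T U : finType) (e : rel T) (eH : rel U) (b : option (U * U) -> U -> T) :
  (forall x, ~~ e x x) ->
  (forall o, injective (b o)) ->
  (forall o u v, eH u v -> e (b o u) (b o v)) ->
  (forall u v, u != v -> ~~ eH u v -> ~~ e (b (Some (u,v)) u) (b (Some (u,v)) v)) ->
  intersects_to e eH.
Proof.
move=> irr binj bhom bsep.
pose K := #|{: U * U}|.
pose idx (i : nat) : option (U * U) := nth None (map Some (enum {: U * U})) i.
pose a (i : 'I_K.+2) (x : T) : nat :=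
  if [pick u | b (idx i) u == x] is Some u then nat_of_ord (enum_rank u)
  else #|U| + i * #|T| + enum_rank x.
exists K.+1, a.
have aB : forall i u, a i (b (idx i) u) = enum_rank u.
  move=> i u; rewrite /a; case: pickP => [u' /eqP /binj -> // | /(_ u)].
  by rewrite eqxx.
have ainj : forall i, injective (a i).
  move=> i x y; rewrite /a.
  case: pickP => [u1 /eqP H1 | H1]; case: pickP => [u2 /eqP H2 | H2].
  - by move/ord_inj/enum_rank_inj => E; rewrite -H1 -H2 E.
  - have : enum_rank u1 < #|U| := ltn_ord _; lia.
  - have : enum_rank u2 < #|U| := ltn_ord _; lia.
  - move=> E; have E' : enum_rank x = enum_rank y :> nat by lia.
    exact: (enum_rank_inj (ord_inj E')).
split => //.
exists (fun u => nat_of_ord (enum_rank u)).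
split; first by move=> u v /ord_inj/enum_rank_inj.
split.
- move=> n; split.
  + move=> H.
    have [x0 Hx0] := H ord_max.
    have [x1 Hx1] := H (inord K).
    move: Hx0; rewrite /a; case: pickP => [u _ <- | _ E0]; first by exists u.
    move: Hx1; rewrite /a; case: pickP => [u _ <- | _ E1]; first by exists u.
    exfalso; rewrite inordK // in E1.
    have : enum_rank x0 < #|T| := ltn_ord _; have : enum_rank x1 < #|T| := ltn_ord _.
    move: E0 E1 => /= E0 E1; rewrite mulSn in E0; lia.
  + by move=> [u <-] i; exists (b (idx i) u); exact: aB.
- move=> u v; split.
  + move=> huv i; exists (b (idx i) u), (b (idx i) v); rewrite !aB.
    by split => //; split => //; exact: bhom.
  + move=> H; case E: (eH u v) => //; exfalso.
    case: (eqVneq u v) => [Euv | neq].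
    * subst v; have [x [y [Hx [Hy Exy]]]] := H ord0.
      have xy : x = y by apply: (ainj ord0); rewrite Hx Hy.
      by subst y; move: (irr x); rewrite Exy.
    * pose j := index (u,v) (enum {: U * U}).
      have jK : j < K by rewrite /j /K cardE index_mem mem_enum.
      have jlt : j < K.+2 by lia.
      have [x [y [Hx [Hy Exy]]]] := H (Ordinal jlt).
      have Hidx : idx (Ordinal jlt) = Some (u,v).
        by rewrite /idx /= (nth_map (u,v)) ?nth_index ?mem_enum // -cardE.
      rewrite -(aB (Ordinal jlt) u) in Hx; rewrite -(aB (Ordinal jlt) v) in Hy.
      move/ainj: Hx => Hx; move/ainj: Hy => Hy; subst x y.
      by move: (bsep u v neq (negbT E)); rewrite -Hidx Exy.
Qed.

Definition lv (t : nat) (s : SV t) : nat := if s is Some (_, i) then i.+1 else 0.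
Definition code (t : nat) (w : tSV t) : nat := enum_rank w.
Definition isPred (t : nat) (x w : tSV t) := (x.1 == w.1) && Sgen w.2 x.2.
Definition isSucc (t : nat) (x w : tSV t) := (x.1 == w.1) && Sgen x.2 w.2.
Definition above (t : nat) (x w : tSV t) :=
  (x.1 == w.1) && match x.2, w.2 with
                  | Some (d, i), Some (d', j) => (d' == d) && (i < j)
                  | _, _ => false end.
Definition cc (t : nat) (x w : tSV t) : nat :=
  (if code w < code x then code w else (code w).-1).+2.

Lemma code_inj t : injective (@code t).
Proof. by move=> u v /ord_inj/enum_rank_inj. Qed.
Lemma code_lt t (w : tSV t) : code w < #|tSV t|.
Proof. exact: ltn_ord. Qed.
Lemma card_tSV t : #|tSV t| = t * (3 * t).+1.
Proof. by rewrite /tSV /SV card_prod card_option card_prod !card_ord. Qed.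

Lemma Sgen_lv t (s1 s2 : SV t) : Sgen s1 s2 -> lv s2 = (lv s1).+1.
Proof.
case: s1 => [[d1 j1]|]; case: s2 => [[d2 j2]|] //=.
- by move=> /andP[_ /eqP ->].
- by move=> /eqP ->.
Qed.

Lemma tSedge_lv t (u v : tSV t) : tSedge u v -> odd (lv u.2) != odd (lv v.2).
Proof.
rewrite /tSedge /Sedge /symc => /andP[_ /orP[/Sgen_lv->|/Sgen_lv->]] /=;
  by case: odd.
Qed.

Lemma tSedge_sym t (u v : tSV t) : tSedge u v = tSedge v u.
Proof. by rewrite /tSedge /Sedge /symc eq_sym orbC. Qed.

Lemma tSedge_irr t (u : tSV t) : tSedge u u = false.
Proof.
apply/negP => /tSedge_lv; by rewrite eqxx.
Qed.

Lemma tSedge_x t (x w : tSV t) : tSedge x w = isSucc x w || isPred x w.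
Proof. by rewrite /tSedge /isSucc /isPred /Sedge /symc -andb_orr. Qed.

Lemma isPred_lv t (x w : tSV t) : isPred x w -> lv x.2 = (lv w.2).+1.
Proof. by move=> /andP[_ /Sgen_lv]. Qed.
Lemma isSucc_lv t (x w : tSV t) : isSucc x w -> lv w.2 = (lv x.2).+1.
Proof. by move=> /andP[_ /Sgen_lv]. Qed.

Lemma pred_uniq t c d (i : 'I_t) (w1 w2 : tSV t) :
  isPred (c, Some (d, i)) w1 -> isPred (c, Some (d, i)) w2 -> w1 = w2.
Proof.
case: w1 w2 => [c1 s1] [c2 s2]; rewrite /isPred /=.
move=> /andP[/eqP <- h1] /andP[/eqP <- h2]; congr (_, _).
move: s1 s2 h1 h2 => [[d1 j1]|] [[d2 j2]|] //=.
- move=> /andP[/eqP -> /eqP e1] /andP[/eqP -> /eqP e2].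
  by congr (Some (_, _)); apply: val_inj => /=; lia.
- by move=> /andP[_ /eqP] /eqP; lia.
- by move=> /eqP ? /andP[_ /eqP]; lia.
Qed.

Lemma succ_uniq t c d (i : 'I_t) (w1 w2 : tSV t) :
  isSucc (c, Some (d, i)) w1 -> isSucc (c, Some (d, i)) w2 -> w1 = w2.
Proof.
case: w1 w2 => [c1 s1] [c2 s2]; rewrite /isSucc /=.
move=> /andP[/eqP <- h1] /andP[/eqP <- h2]; congr (_, _).
move: s1 s2 h1 h2 => [[d1 j1]|] [[d2 j2]|] //=.
move=> /andP[/eqP <- /eqP e1] /andP[/eqP <- /eqP e2].
by congr (Some (_, _)); apply: val_inj => /=; lia.
Qed.

Lemma isPred_above t c d (i : 'I_t) (w : tSV t) :
  isPred (c, Some (d, i)) w -> above (c, Some (d, i)) w = false.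
Proof.
case: w => [c1 [[d1 j1]|]]; rewrite /isPred /above /= ?andbF //.
move=> /andP[_ /andP[_ /eqP e]]; apply/negbTE; rewrite negb_and.
by apply/orP; right; lia.
Qed.

Lemma isSucc_above t c d (i : 'I_t) (w : tSV t) :
  isSucc (c, Some (d, i)) w -> above (c, Some (d, i)) w.
Proof.
case: w => [c1 [[d1 j1]|]]; rewrite /isSucc /above //=.
move=> /andP[-> /andP[/eqP <- /eqP e]] /=; rewrite eqxx /=; lia.
Qed.

Lemma above_edge1 t c d (i : 'I_t) (w1 w2 : tSV t) :
  w1.1 = w2.1 -> Sgen w1.2 w2.2 -> w1 != (c, Some (d, i)) ->
  above (c, Some (d, i)) w1 = above (c, Some (d, i)) w2.
Proof.
case: w1 w2 => [c1 s1] [c2 s2] /= <-; rewrite /above /=.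
case: (eqVneq c c1) => [Ec|] //=; subst c1.
move: s1 s2 => [[d1 j1]|] [[d2 j2]|] //=.
- move=> /andP[/eqP <- /eqP e] hne.
  case: (eqVneq d1 d) => [Ed|] //=; subst d1.
  case: (eqVneq (nat_of_ord i) (nat_of_ord j1)) => [Eij|Nij].
  + have Ej : j1 = i by apply: val_inj.
    by rewrite Ej eqxx in hne.
  + rewrite e; move: Nij => /eqP Nij; apply/idP/idP; lia.
- by move=> /eqP -> _; rewrite andbF.
Qed.

Lemma above_edge t c d (i : 'I_t) (w1 w2 : tSV t) :
  tSedge w1 w2 -> w1 != (c, Some (d, i)) -> w2 != (c, Some (d, i)) ->
  above (c, Some (d, i)) w1 = above (c, Some (d, i)) w2.
Proof.
rewrite /tSedge /Sedge /symc => /andP[/eqP E /orP[h|h]] n1 n2.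
- exact: above_edge1.
- by symmetry; apply: above_edge1.
Qed.

Lemma cc_bounds t (x w : tSV t) : w != x -> 2 <= cc x w <= #|tSV t|.
Proof.
move=> nwx; have ne : code w != code x by apply: contra nwx => /eqP/code_inj ->.
have := code_lt w; have := code_lt x; move: ne; rewrite /cc.
case: ifP => h; lia.
Qed.

Lemma cc_inj t (x w1 w2 : tSV t) : w1 != x -> w2 != x -> cc x w1 = cc x w2 -> w1 = w2.
Proof.
move=> n1 n2.
have e1 : code w1 != code x by apply: contra n1 => /eqP/code_inj ->.
have e2 : code w2 != code x by apply: contra n2 => /eqP/code_inj ->.
move=> E; apply: code_inj; move: E e1 e2; rewrite /cc.
by case: ifP => h1; case: ifP => h2; lia.
Qed.

Definition mk (q : nat) (s : bool) (j : nat) : KV q.+1 :=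
  Some (if s then inl (inord j) else inr (inord j)).

Lemma mk_inj q s1 s2 j1 j2 : j1 <= q -> j2 <= q -> mk q s1 j1 = mk q s2 j2 ->
  s1 = s2 /\ j1 = j2.
Proof.
move=> h1 h2; rewrite /mk; case: s1; case: s2 => //= -[E];
  (split => //; move: (congr1 (@nat_of_ord _) E); rewrite !inordK //; lia).
Qed.

Lemma Xedge_mk q s1 s2 j1 j2 : s1 != s2 -> Xedge (mk q s1 j1) (mk q s2 j2).
Proof. by case: s1; case: s2. Qed.
Lemma Yedge_mk q s1 s2 j1 j2 : s1 != s2 -> Yedge (mk q s1 j1) (mk q s2 j2).
Proof. by case: s1; case: s2. Qed.
Lemma Xedge_same q s j1 j2 : Xedge (mk q s j1) (mk q s j2) = false.
Proof. by case: s. Qed.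
Lemma Yedge_same q s j1 j2 : Yedge (mk q s j1) (mk q s j2) = false.
Proof. by case: s. Qed.
Lemma Xedge_None q s j : j <= q -> Xedge None (mk q s j) = s && ((j == 0) || (j == 1)).
Proof. by move=> h; case: s; rewrite /Xedge /symc /Xgen /Kgen /= ?inordK ?orbF. Qed.
Lemma Yedge_None q s j : j <= q -> Yedge None (mk q s j) = (j == 0).
Proof. by move=> h; case: s; rewrite /Yedge /symc /Ygen /Kgen /= ?inordK ?orbF. Qed.
Lemma Xedge_sym q (a b : KV q) : Xedge a b = Xedge b a.
Proof. by rewrite /Xedge /symc orbC. Qed.
Lemma Yedge_sym q (a b : KV q) : Yedge a b = Yedge b a.
Proof. by rewrite /Yedge /symc orbC. Qed.
Lemma Xedge_irr q (a : KV q) : ~~ Xedge a a.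
Proof. by case: a => [[a|a]|]; rewrite /Xedge /symc /Xgen /Kgen. Qed.
Lemma Yedge_irr q (a : KV q) : ~~ Yedge a a.
Proof. by case: a => [[a|a]|]; rewrite /Yedge /symc /Ygen /Kgen. Qed.

Definition base t q (w : tSV t) : KV q.+1 := mk q (odd (lv w.2)) (code w).
Definition bmap t q (z : tSV t -> tSV t -> KV q.+1) (o : option (tSV t * tSV t)) : tSV t -> KV q.+1 :=
  match o with
  | Some (u, v) => if u.2 is Some _ then z u else if v.2 is Some _ then z v else base q
  | None => base q
  end.

Lemma final t q (e : rel (KV q.+1)) (z : tSV t -> tSV t -> KV q.+1) :
  #|tSV t| <= q ->
  (forall a, ~~ e a a) -> (forall a b, e a b = e b a) ->
  (forall s1 s2 j1 j2, s1 != s2 -> e (mk q s1 j1) (mk q s2 j2)) ->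
  (forall s j1 j2, e (mk q s j1) (mk q s j2) = false) ->
  (forall c d i, injective (z (c, Some (d, i)))) ->
  (forall c d i u v, tSedge u v -> e (z (c, Some (d, i)) u) (z (c, Some (d, i)) v)) ->
  (forall c d i v, v != (c, Some (d, i)) -> ~~ tSedge (c, Some (d, i)) v ->
     ~~ e (z (c, Some (d, i)) (c, Some (d, i))) (z (c, Some (d, i)) v)) ->
  intersects_to e (@tSedge t).
Proof.
move=> H irr esym emk esame zinj zhom zsep.
have baseinj : injective (@base t q).
  move=> u v E.
  have hu : code u <= q by have := code_lt u; lia.
  have hv : code v <= q by have := code_lt v; lia.
  by case: (mk_inj hu hv E) => _ /code_inj.
have basehom : forall u v : tSV t, tSedge u v -> e (base q u) (base q v).
  move=> u v huv; rewrite /base; apply: emk; exact: tSedge_lv huv.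
apply: (@assemble _ _ e _ (bmap z)) => //.
- case=> [[u v]|] /=; last exact: baseinj.
  case: u => c [[d i]|] /=; first exact: zinj.
  by case: v => c' [[d' i']|] /=; [exact: zinj | exact: baseinj].
- case=> [[u v]|] a b hab /=; last exact: basehom.
  case: u => c [[d i]|] /=; first exact: zhom.
  by case: v => c' [[d' i']|] /=; [exact: zhom | exact: basehom].
- move=> u v neq nuv /=.
  case: u neq nuv => c [[d i]|] neq nuv.
  + by apply: zsep => //; rewrite eq_sym.
  + case: v neq nuv => c' [[d' i']|] neq nuv.
    * by rewrite esym; apply: zsep => //; rewrite tSedge_sym.
    * by rewrite /base /= esame.
Qed.

Definition posX t (x w : tSV t) : nat :=
  if isPred x w then 0 else if isSucc x w then 1 else cc x w.
Definition zX t q (x w : tSV t) : KV q.+1 :=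
  if w == x then None else mk q (odd (lv w.2 + lv x.2)) (posX x w).
Definition posY t (x w : tSV t) : nat :=
  if isPred x w || isSucc x w then 0 else cc x w.
Definition sideY t (x w : tSV t) : bool := odd (lv w.2 + lv x.2) != above x w.
Definition zY t q (x w : tSV t) : KV q.+1 :=
  if w == x then None else mk q (sideY x w) (posY x w).

Lemma pred_succ t (x w : tSV t) : isPred x w -> isSucc x w -> False.
Proof. by move=> /isPred_lv h1 /isSucc_lv h2; lia. Qed.

Lemma isPred_neq t (x w : tSV t) : isPred x w -> w != x.
Proof. by move=> /isPred_lv h; apply/eqP => E; rewrite E in h; lia. Qed.
Lemma isSucc_neq t (x w : tSV t) : isSucc x w -> w != x.
Proof. by move=> /isSucc_lv h; apply/eqP => E; rewrite E in h; lia. Qed.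

Lemma isPred_odd t (x w : tSV t) : isPred x w -> odd (lv w.2 + lv x.2).
Proof. by move=> /isPred_lv ->; rewrite addnS oddS addnn odd_double. Qed.
Lemma isSucc_odd t (x w : tSV t) : isSucc x w -> odd (lv w.2 + lv x.2).
Proof. by move=> /isSucc_lv ->; rewrite addSn oddS addnn odd_double. Qed.

Lemma posX_le t q (x w : tSV t) : #|tSV t| <= q -> 1 <= q -> w != x -> posX x w <= q.
Proof.
move=> H H1 n; rewrite /posX; case: ifP => _ //; case: ifP => _ //.
have := cc_bounds n; lia.
Qed.
Lemma posY_le t q (x w : tSV t) : #|tSV t| <= q -> w != x -> posY x w <= q.
Proof.
move=> H n; rewrite /posY; case: ifP => _ //; have := cc_bounds n; lia.
Qed.

Lemma posX_inj t (x w1 w2 : tSV t) :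
  (forall a b, isPred x a -> isPred x b -> a = b) ->
  (forall a b, isSucc x a -> isSucc x b -> a = b) ->
  w1 != x -> w2 != x -> posX x w1 = posX x w2 -> w1 = w2.
Proof.
move=> hp hs n1 n2; rewrite /posX.
have b1 := cc_bounds n1; have b2 := cc_bounds n2.
case: (boolP (isPred x w1)) => p1; case: (boolP (isPred x w2)) => p2.
- by move=> _; apply: hp.
- by case: (boolP (isSucc x w2)) => s2; lia.
- by case: (boolP (isSucc x w1)) => s1; lia.
case: (boolP (isSucc x w1)) => s1; case: (boolP (isSucc x w2)) => s2.
- by move=> _; apply: hs.
- lia.
- lia.
- exact: cc_inj.
Qed.


Lemma zX_inj t q c d (i : 'I_t) : #|tSV t| <= q -> 1 <= q ->
  injective (zX q (c, Some (d, i))).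
Proof.
move=> H H1 w1 w2; rewrite /zX.
case: (eqVneq w1 (c, Some (d, i))) => [->|n1];
  case: (eqVneq w2 (c, Some (d, i))) => [->|n2] //.
move=> E; have [_ E'] := mk_inj (posX_le H H1 n1) (posX_le H H1 n2) E.
by apply: (posX_inj (@pred_uniq t c d i) (@succ_uniq t c d i)).
Qed.

Lemma zX_nb t q (x w : tSV t) : #|tSV t| <= q -> 1 <= q ->
  tSedge x w -> Xedge (zX q x x) (zX q x w).
Proof.
move=> H H1 h.
have nw : w != x by apply/eqP => E; rewrite E tSedge_irr in h.
rewrite /zX eqxx (negbTE nw) Xedge_None ?posX_le //.
rewrite tSedge_x in h; case/orP: h => h.
- rewrite (isSucc_odd h) /posX; case: ifP => //= _; by rewrite h.
- by rewrite (isPred_odd h) /posX h.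
Qed.

Lemma zX_hom t q c d (i : 'I_t) (u v : tSV t) : #|tSV t| <= q -> 1 <= q ->
  tSedge u v -> Xedge (zX q (c, Some (d, i)) u) (zX q (c, Some (d, i)) v).
Proof.
move=> H H1 huv.
case: (eqVneq u (c, Some (d, i))) => [Eu|nu].
  by rewrite Eu; apply: zX_nb; rewrite -?Eu.
case: (eqVneq v (c, Some (d, i))) => [Ev|nv].
  by rewrite Ev Xedge_sym; apply: zX_nb; rewrite // -Ev tSedge_sym.
rewrite /zX (negbTE nu) (negbTE nv); apply: Xedge_mk.
by move: (tSedge_lv huv); rewrite !oddD; do 3 case: odd.
Qed.

Lemma zX_sep t q (x v : tSV t) : #|tSV t| <= q -> 1 <= q ->
  v != x -> ~~ tSedge x v -> ~~ Xedge (zX q x x) (zX q x v).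
Proof.
move=> H H1 nv nt.
rewrite /zX eqxx (negbTE nv) Xedge_None ?posX_le //.
rewrite tSedge_x negb_or in nt; case/andP: nt => ns np.
rewrite /posX (negbTE np) (negbTE ns).
have hb := cc_bounds nv; apply/negP => /andP[_ /orP[/eqP|/eqP]]; lia.
Qed.

Lemma sideY_pred t c d (i : 'I_t) w : isPred (c, Some (d, i)) w -> sideY (c, Some (d, i)) w.
Proof. by move=> h; rewrite /sideY (isPred_odd h) (isPred_above h). Qed.
Lemma sideY_succ t c d (i : 'I_t) w : isSucc (c, Some (d, i)) w -> sideY (c, Some (d, i)) w = false.
Proof. by move=> h; rewrite /sideY (isSucc_odd h) (isSucc_above h). Qed.

Lemma zY_inj t q c d (i : 'I_t) : #|tSV t| <= q ->
  injective (zY q (c, Some (d, i))).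
Proof.
move=> H w1 w2; rewrite /zY.
case: (eqVneq w1 (c, Some (d, i))) => [->|n1];
  case: (eqVneq w2 (c, Some (d, i))) => [->|n2] //.
move=> E; have [Es E'] := mk_inj (posY_le H n1) (posY_le H n2) E.
move: Es E'; rewrite /posY.
have b1 := cc_bounds n1; have b2 := cc_bounds n2.
case: (boolP (_ || _)) => h1; case: (boolP (_ || _)) => h2.
- case/orP: h1 => h1; case/orP: h2 => h2.
  + by move=> _ _; apply: pred_uniq h1 h2.
  + by rewrite (sideY_pred h1) (sideY_succ h2).
  + by rewrite (sideY_pred h2) (sideY_succ h1).
  + by move=> _ _; apply: succ_uniq h1 h2.
- lia.
- lia.
- by move=> _; apply: cc_inj.
Qed.

Lemma zY_nb t q c d (i : 'I_t) (w : tSV t) : #|tSV t| <= q ->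
  tSedge (c, Some (d, i)) w -> Yedge (zY q (c, Some (d, i)) (c, Some (d, i))) (zY q (c, Some (d, i)) w).
Proof.
move=> H h.
have nw : w != (c, Some (d, i)) by apply/eqP => E; rewrite E tSedge_irr in h.
rewrite /zY eqxx (negbTE nw) Yedge_None ?posY_le //.
by rewrite tSedge_x orbC in h; rewrite /posY h.
Qed.

Lemma zY_hom t q c d (i : 'I_t) (u v : tSV t) : #|tSV t| <= q ->
  tSedge u v -> Yedge (zY q (c, Some (d, i)) u) (zY q (c, Some (d, i)) v).
Proof.
move=> H huv.
case: (eqVneq u (c, Some (d, i))) => [Eu|nu].
  by rewrite Eu; apply: zY_nb; rewrite -?Eu.
case: (eqVneq v (c, Some (d, i))) => [Ev|nv].
  by rewrite Ev Yedge_sym; apply: zY_nb; rewrite // -Ev tSedge_sym.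
rewrite /zY (negbTE nu) (negbTE nv); apply: Yedge_mk.
rewrite /sideY (above_edge huv nu nv).
by move: (tSedge_lv huv); rewrite !oddD; case: above; do 3 case: odd.
Qed.

Lemma zY_sep t q (x v : tSV t) : #|tSV t| <= q ->
  v != x -> ~~ tSedge x v -> ~~ Yedge (zY q x x) (zY q x v).
Proof.
move=> H nv nt.
rewrite /zY eqxx (negbTE nv) Yedge_None ?posY_le //.
rewrite tSedge_x negb_or in nt; case/andP: nt => ns np.
rewrite /posY (negbTE np) (negbTE ns) /=.
have hb := cc_bounds nv; apply/eqP; lia.
Qed.

Theorem mainTheorem6 (t p : nat) :
  1 <= t -> 3 * t ^ 2 + t + 1 <= p ->
  intersects_to (@Xedge p) (@tSedge t) /\ intersects_to (@Yedge p) (@tSedge t).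
Proof.
move=> t1; case: p => [|q] hp; first by move: hp; lia.
have H : #|tSV t| <= q by rewrite card_tSV; rewrite -mulnn in hp; nia.
have H1 : 1 <= q by rewrite -mulnn in hp; nia.
split.
- apply: (@final t q _ (zX q)) => //.
  + exact: Xedge_irr.
  + exact: Xedge_sym.
  + exact: Xedge_mk.
  + exact: Xedge_same.
  + by move=> c d i; apply: zX_inj.
  + by move=> c d i u v; apply: zX_hom.
  + by move=> c d i v; apply: zX_sep.
- apply: (@final t q _ (zY q)) => //.
  + exact: Yedge_irr.
  + exact: Yedge_sym.
  + exact: Yedge_mk.
  + exact: Yedge_same.
  + by move=> c d i; apply: zY_inj.
  + by move=> c d i u v; apply: zY_hom.
  + by move=> c d i v; apply: zY_sep.
Qed.
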